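(* Let $m\ge1$, $y\in\mathbb{R}^{2m+1}_+$ with $c:=\sqrt{\sum_{i=0}^{2m}y_i}>0$, and let $(x^t)_{t\ge0}$ be generated by $x^{t+1}=I(x^t)$, where $$I(x)_j=x_j\,\frac1c\sum_{\ell=0}^m\frac{x_\ell\,y_{\ell+j}}{(x*x)_{\ell+j}},\qquad j=0,\dots,m,$$ from an initial $x^0\in\mathbb{R}^{m+1}_+$. If $x^\infty$ is a limit point of the sequence $(x^t)$, then $x^\infty=I(x^\infty)$.
   Context: For $x\in\mathbb{R}^{m+1}$ set $x_k=0$ for $k<0$, $k>m$, and $(x*x)_i=\sum_{j=0}^i x_{i-j}x_j$ for $i=0,\dots,2m$. The iteration is assumed well-defined (denominators positive, e.g. $x^0>0$). *)

(* Defs.v *)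
From mathcomp Require Import all_boot all_order all_algebra.
From mathcomp Require Import reals.
Set Implicit Arguments. Unset Strict Implicit. Unset Printing Implicit Defensive.
Import Order.TTheory GRing.Theory Num.Theory.
Local Open Scope ring_scope.

Definition ext (R : realType) (n : nat) (x : 'I_n -> R) (k : nat) : R :=
  match insub k with Some i => x i | None => 0 end.

Definition conv (R : realType) (m : nat) (x : 'I_m.+1 -> R) (i : nat) : R :=
  \sum_(j < i.+1) ext x (i - j) * ext x j.

Definition cst (R : realType) (m : nat) (y : 'I_(2 * m).+1 -> R) : R :=
  Num.sqrt (\sum_(i < (2 * m).+1) y i).

Definition Imap (R : realType) (m : nat) (y : 'I_(2 * m).+1 -> R)
    (x : 'I_m.+1 -> R) (j : 'I_m.+1) : R :=
  x j * (1 / cst y) *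
    \sum_(l < m.+1) x l * ext y (l + j) / conv x (l + j).

Definition limit_point (R : realType) (m : nat) (xs : nat -> 'I_m.+1 -> R)
    (xinf : 'I_m.+1 -> R) : Prop :=
  forall eps : R, 0 < eps -> forall N : nat,
    exists t : nat, (N <= t)%N /\ forall i, `|xs t i - xinf i| < eps.

(* Main.v *)
Require Import Defs.
From mathcomp Require Import all_boot all_order all_algebra.
From mathcomp Require Import reals exp.
From mathcomp Require Import ring lra zify.
Import Order.TTheory GRing.Theory Num.Theory.
Set Implicit Arguments. Unset Strict Implicit. Unset Printing Implicit Defensive.
Local Open Scope ring_scope.

Section Alg.
Variable R : realType.

Lemma ext_ord n (x : 'I_n -> R) (i : 'I_n) : ext x i = x i.
Proof.
rewrite /ext; case: insubP => [u _ /val_inj -> //|]; by rewrite ltn_ord.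
Qed.

Lemma ext_out n (x : 'I_n -> R) k : (n <= k)%N -> ext x k = 0.
Proof.
move=> h; rewrite /ext; case: insubP => [u hu _|//].
by move: hu; rewrite ltnNge h.
Qed.

Lemma ext_ge0 n (x : 'I_n -> R) k : (forall i, 0 <= x i) -> 0 <= ext x k.
Proof. by move=> h; rewrite /ext; case: insubP. Qed.

Variable m : nat.

Lemma sum_ind (x : 'I_m.+1 -> R) (j k : nat) :
  \sum_(l < m.+1) (((l + j)%N == k)%:R * x l) =
  if (j <= k)%N then ext x (k - j) else 0.
Proof.
case: ifP => hjk.
  case: (ltnP (k - j) m.+1) => hk.
    rewrite (bigD1 (Ordinal hk)) //= subnK // eqxx mul1r big1 ?addr0; first by symmetry; exact: (ext_ord x (Ordinal hk)).
    move=> l hl; case: eqP => [e|]; last by rewrite mul0r.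
    have el : l = Ordinal hk by apply: val_inj => /=; lia.
    by rewrite el eqxx in hl.
  rewrite ext_out // big1 // => l _; case: eqP => [e|]; last by rewrite mul0r.
  have := ltn_ord l; lia.
rewrite big1 // => l _; case: eqP => [e|]; last by rewrite mul0r.
lia.
Qed.

Lemma conv_pairs (x : 'I_m.+1 -> R) k :
  conv x k = \sum_(l < m.+1) \sum_(j < m.+1) (((l + j)%N == k)%:R * (x l * x j)).
Proof.
rewrite exchange_big /=.
have -> : \sum_(j < m.+1) \sum_(i < m.+1) (((i + j)%N == k)%:R * (x i * x j))
   = \sum_(j < m.+1) (ext x j * if (j <= k)%N then ext x (k - j) else 0).
  apply: eq_bigr => j _; rewrite -sum_ind mulr_sumr ext_ord; apply: eq_bigr => i _.
  ring.
rewrite /conv (big_ord_widen (k + m).+1 (fun i => ext x (k - i) * ext x i)); last lia.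
rewrite (big_ord_widen (k + m).+1 (fun j => ext x j * if (j <= k)%N then ext x (k - j) else 0)); last lia.
rewrite big_mkcond [RHS]big_mkcond /=. apply: eq_bigr => i _ /=.
rewrite ltnS; case: (leqP i k) => hik; case: (ltnP i m.+1) => him /=.
- by rewrite mulrC.
- by rewrite (ext_out x (k:=i)) // mulr0.
- by rewrite mulr0.
- by [].
Qed.

Lemma sum_pairs (h : nat -> R) (G : 'I_m.+1 -> 'I_m.+1 -> R) :
  \sum_(k < (2 * m).+1) h k * \sum_(l < m.+1) \sum_(j < m.+1) (((l + j)%N == k)%:R * G l j)
  = \sum_(l < m.+1) \sum_(j < m.+1) h (l + j)%N * G l j.
Proof.
under eq_bigr do rewrite mulr_sumr.
rewrite exchange_big; apply: eq_bigr => l _.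
under eq_bigr do rewrite mulr_sumr.
rewrite exchange_big; apply: eq_bigr => j _.
have hl : (l + j < (2 * m).+1)%N by have := ltn_ord l; have := ltn_ord j; lia.
rewrite (bigD1 (Ordinal hl)) //= eqxx mul1r big1 ?addr0 // => k hk.
case: eqP => [e|]; last by rewrite mul0r mulr0.
have ek : k = Ordinal hl by apply: val_inj => /=; lia.
by rewrite ek eqxx in hk.
Qed.

End Alg.

Section Imap.
Variable R : realType.
Variable m : nat.
Variable y : 'I_(2 * m).+1 -> R.
Hypothesis hy : forall i, 0 <= y i.
Hypothesis hc : 0 < cst y.

Definition gfun (x : 'I_m.+1 -> R) (j : 'I_m.+1) : R :=
  1 / cst y * \sum_(l < m.+1) x l * ext y (l + j)%N / conv x (l + j)%N.

Definition nonneg (x : 'I_m.+1 -> R) := forall i, 0 <= x i.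
Definition cpos (x : 'I_m.+1 -> R) := forall k, (k <= 2 * m)%N -> 0 < conv x k.

Lemma Imap_g x j : Imap y x j = x j * gfun x j.
Proof. by rewrite /Imap /gfun [RHS]mulrA. Qed.

Lemma conv_ge0 x k : nonneg x -> 0 <= conv x k.
Proof.
move=> hx; apply: sumr_ge0 => i _; apply: mulr_ge0; exact: ext_ge0.
Qed.

Lemma gfun_ge0 x j : nonneg x -> 0 <= gfun x j.
Proof.
move=> hx; apply: mulr_ge0; first by rewrite div1r invr_ge0 ltW.
apply: sumr_ge0 => l _; apply: mulr_ge0; last by rewrite invr_ge0 conv_ge0.
apply: mulr_ge0 => //; exact: ext_ge0.
Qed.

Lemma Imap_ge0 x j : nonneg x -> 0 <= Imap y x j.
Proof. by move=> hx; rewrite Imap_g mulr_ge0 ?gfun_ge0. Qed.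

Lemma sq_c : cst y ^+ 2 = \sum_i y i.
Proof. by rewrite /cst sqr_sqrtr // sumr_ge0. Qed.

Lemma sum_xx_h (x : 'I_m.+1 -> R) (h : nat -> R) :
  \sum_(l < m.+1) \sum_(j < m.+1) h (l + j)%N * (x l * x j)
  = \sum_(k < (2 * m).+1) h k * conv x k.
Proof.
rewrite -sum_pairs; apply: eq_bigr => k _; by rewrite conv_pairs.
Qed.

Lemma sum_Imap x : nonneg x -> cpos x -> \sum_j Imap y x j = cst y.
Proof.
move=> hx hp.
have hc0 : cst y != 0 by rewrite gt_eqF.
transitivity (1 / cst y * \sum_(l < m.+1) \sum_(j < m.+1)
   (ext y (l + j)%N / conv x (l + j)%N) * (x l * x j)).
  rewrite exchange_big mulr_sumr; apply: eq_bigr => j _.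
  rewrite Imap_g /gfun mulr_sumr mulr_sumr mulr_sumr; apply: eq_bigr => l _.
  ring.
rewrite (sum_xx_h x (fun k => ext y k / conv x k)).
have -> : \sum_(k < (2 * m).+1) ext y k / conv x k * conv x k = \sum_i y i.
  apply: eq_bigr => k _; rewrite divfK ?ext_ord //.
  by rewrite gt_eqF // hp // -ltnS.
by rewrite -sq_c; field.
Qed.

End Imap.

Section Key.
Variable R : realType.
Variable m : nat.
Variable y : 'I_(2 * m).+1 -> R.
Hypothesis hy : forall i, 0 <= y i.
Hypothesis hc : 0 < cst y.

Lemma ln_le_sub1 (t : R) : 0 < t -> ln t <= t - 1.
Proof.
move=> ht; have := @le_ln1Dx R (t - 1); have -> : 1 + (t - 1) = t by ring.
apply; lra.
Qed.

Lemma lnM' (a b : R) : 0 < a -> 0 < b -> ln (a * b) = ln a + ln b.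
Proof. by move=> ha hb; rewrite lnM. Qed.

Lemma lnV' (a : R) : 0 < a -> ln (a^-1) = - ln a.
Proof. by move=> ha; rewrite lnV. Qed.

Lemma g_pos x (l j : 'I_m.+1) : nonneg x -> cpos x -> 0 < x j ->
  0 < ext y (j + l)%N -> 0 < gfun y x l.
Proof.
move=> hx hp hxj hyj; rewrite /gfun; apply: mulr_gt0; first by rewrite div1r invr_gt0.
rewrite (bigD1 j) //=; apply: ltr_pwDl.
  apply: divr_gt0; first exact: mulr_gt0.
  by apply: hp; have := ltn_ord l; have := ltn_ord j; lia.
apply: sumr_ge0 => i _; apply: mulr_ge0; last by rewrite invr_ge0 conv_ge0.
by apply: mulr_ge0 => //; exact: ext_ge0.
Qed.

Lemma pair_ineq x (k : 'I_(2 * m).+1) (l j : 'I_m.+1) (r : R) :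
  nonneg x -> cpos x -> 0 < y k -> 0 < r ->
  (((l + j)%N == k)%:R * (x l * x j)) * (ln (gfun y x l) + ln (gfun y x j)) <=
  (((l + j)%N == k)%:R * (x l * x j)) * (gfun y x l * gfun y x j / r - 1 + ln r).
Proof.
move=> hx hp hyk hr.
case: eqP => [e|]; last by rewrite !mul0r.
rewrite mul1r.
have [hxl0|hxl] := eqVneq (x l) 0; first by rewrite hxl0 !mul0r.
have [hxj0|hxj] := eqVneq (x j) 0; first by rewrite hxj0 !mulr0 !mul0r.
have hxl' : 0 < x l by rewrite lt_def hxl hx.
have hxj' : 0 < x j by rewrite lt_def hxj hx.
have hgl : 0 < gfun y x l.
  apply: (g_pos (j := j)) => //; rewrite addnC e ext_ord //.
have hgj : 0 < gfun y x j.
  apply: (g_pos (j := l)) => //; rewrite e ext_ord //.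
apply: ler_wpM2l; first by rewrite mulr_ge0 ?hx.
have -> : ln (gfun y x l) + ln (gfun y x j) = ln (gfun y x l * gfun y x j / r) + ln r.
  have hq : 0 < gfun y x l * gfun y x j / r by apply: divr_gt0 => //; apply: mulr_gt0.
  by rewrite -(lnM' hq hr) divfK ?gt_eqF // lnM'.
rewrite lerD2r; apply: ln_le_sub1.
by apply: divr_gt0 => //; apply: mulr_gt0.
Qed.

End Key.

Section Key2.
Variable R : realType.
Variable m : nat.
Variable y : 'I_(2 * m).+1 -> R.
Hypothesis hy : forall i, 0 <= y i.
Hypothesis hc : 0 < cst y.

Lemma stepk x (k : 'I_(2 * m).+1) : nonneg x -> cpos x -> cpos (Imap y x) ->
  ext y k / conv x k * \sum_(l < m.+1) \sum_(j < m.+1)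
     (((l + j)%N == k)%:R * (x l * x j * (ln (gfun y x l) + ln (gfun y x j))))
  <= y k * (ln (conv (Imap y x) k) - ln (conv x k)).
Proof.
move=> hx hp hpz.
have hk : (k <= 2 * m)%N by rewrite -ltnS.
have hcx := hp k hk; have hcz := hpz k hk.
rewrite ext_ord.
have := hy k; rewrite le_eqVlt => /orP[/eqP <-|hyk]; first by rewrite !mul0r.
set r := conv (Imap y x) k / conv x k.
have hr : 0 < r by apply: divr_gt0.
have H1 : \sum_(l < m.+1) \sum_(j < m.+1)
     (((l + j)%N == k)%:R * (x l * x j * (ln (gfun y x l) + ln (gfun y x j))))
  <= \sum_(l < m.+1) \sum_(j < m.+1)
     ((((l + j)%N == k)%:R * (x l * x j * (gfun y x l * gfun y x j))) * r^-1
      + (((l + j)%N == k)%:R * (x l * x j)) * (ln r - 1)).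
  apply: ler_sum => l _; apply: ler_sum => j _.
  have := pair_ineq hy hc l j hx hp hyk hr.
  have e1 : ((l + j)%N == k)%:R * (x l * x j * (ln (gfun y x l) + ln (gfun y x j)))
     = ((l + j)%N == k)%:R * (x l * x j) * (ln (gfun y x l) + ln (gfun y x j)) by ring.
  have e2 : ((l + j)%N == k)%:R * (x l * x j * (gfun y x l * gfun y x j)) * r^-1
      + ((l + j)%N == k)%:R * (x l * x j) * (ln r - 1)
     = ((l + j)%N == k)%:R * (x l * x j) * (gfun y x l * gfun y x j / r - 1 + ln r) by ring.
  by rewrite e1 e2.
have H2 : \sum_(l < m.+1) \sum_(j < m.+1)
     ((((l + j)%N == k)%:R * (x l * x j * (gfun y x l * gfun y x j))) * r^-1
      + (((l + j)%N == k)%:R * (x l * x j)) * (ln r - 1))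
   = conv (Imap y x) k * r^-1 + conv x k * (ln r - 1).
  rewrite (conv_pairs (Imap y x)) (conv_pairs x) !mulr_suml -big_split /=.
  apply: eq_bigr => l _; rewrite !mulr_suml -big_split /=.
  apply: eq_bigr => j _; rewrite !Imap_g; ring.
rewrite H2 in H1.
have e3 : conv (Imap y x) k * r^-1 + conv x k * (ln r - 1) = conv x k * ln r.
  rewrite /r invfM invrK; field; by rewrite gt_eqF.
rewrite e3 in H1.
have e4 : ln r = ln (conv (Imap y x) k) - ln (conv x k).
  by rewrite /r lnM' ?invr_gt0 // lnV'.
rewrite -e4.
have -> : y k * ln r = y k / conv x k * (conv x k * ln r).
  by field; rewrite gt_eqF.
apply: ler_wpM2l => //; apply: divr_ge0 => //; exact: ltW.
Qed.

End Key2.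

Section Key3.
Variable R : realType.
Variable m : nat.
Variable y : 'I_(2 * m).+1 -> R.
Hypothesis hy : forall i, 0 <= y i.
Hypothesis hc : 0 < cst y.

Definition Fy (x : 'I_m.+1 -> R) := \sum_(k < (2 * m).+1) y k * ln (conv x k).

Lemma wsum x (j : 'I_m.+1) :
  \sum_(l < m.+1) ext y (l + j)%N / conv x (l + j)%N * (x l * x j) = cst y * Imap y x j.
Proof.
rewrite Imap_g /gfun.
have -> : cst y * (x j * (1 / cst y * \sum_(l < m.+1) x l * ext y (l + j)%N / conv x (l + j)%N))
   = x j * \sum_(l < m.+1) x l * ext y (l + j)%N / conv x (l + j)%N.
  by field; rewrite gt_eqF.
rewrite mulr_sumr; apply: eq_bigr => l _; ring.
Qed.

Lemma step3 x : nonneg x -> cpos x -> cpos (Imap y x) ->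
  2 * cst y * \sum_j (Imap y x j * ln (gfun y x j)) <= Fy (Imap y x) - Fy x.
Proof.
move=> hx hp hpz.
have -> : Fy (Imap y x) - Fy x
   = \sum_(k < (2 * m).+1) y k * (ln (conv (Imap y x) k) - ln (conv x k)).
  by rewrite /Fy -sumrB; apply: eq_bigr => k _; rewrite mulrBr.
apply: le_trans; last first.
  apply: ler_sum => k _; exact: (stepk hy hc k hx hp hpz).
rewrite (sum_pairs (fun k => ext y k / conv x k)
   (fun l j => x l * x j * (ln (gfun y x l) + ln (gfun y x j)))).
set w := fun (l j : 'I_m.+1) => ext y (l + j)%N / conv x (l + j)%N * (x l * x j).
have wsym : forall l j, w l j = w j l by move=> l j; rewrite /w addnC mulrC [x l * _]mulrC mulrC.
have -> : \sum_(l < m.+1) \sum_(j < m.+1)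
    ext y (l + j)%N / conv x (l + j)%N * (x l * x j * (ln (gfun y x l) + ln (gfun y x j)))
  = \sum_(l < m.+1) \sum_(j < m.+1) w l j * ln (gfun y x l)
    + \sum_(l < m.+1) \sum_(j < m.+1) w l j * ln (gfun y x j).
  rewrite -big_split /=; apply: eq_bigr => l _; rewrite -big_split /=.
  apply: eq_bigr => j _; rewrite /w; ring.
have -> : \sum_(l < m.+1) \sum_(j < m.+1) w l j * ln (gfun y x l)
   = \sum_l (cst y * Imap y x l) * ln (gfun y x l).
  apply: eq_bigr => l _; rewrite -mulr_suml -wsum; congr (_ * _).
  by apply: eq_bigr => j _; rewrite wsym.
have -> : \sum_(l < m.+1) \sum_(j < m.+1) w l j * ln (gfun y x j)
   = \sum_j (cst y * Imap y x j) * ln (gfun y x j).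
  rewrite exchange_big; apply: eq_bigr => j _; rewrite -mulr_suml -wsum //.
rewrite -big_split /= mulr_sumr; rewrite le_eqVlt; apply/orP; left; apply/eqP; apply: eq_bigr => j _; ring.
Qed.

End Key3.

Section Key4.
Variable R : realType.

Lemma coord_ineq (a g : R) : 0 <= a -> 0 <= g ->
  2 * (a * g - a * Num.sqrt g) <= a * g * ln g.
Proof.
move=> ha; rewrite le_eqVlt => /orP[/eqP <-|hg].
  by rewrite sqrtr0 !mulr0 subrr mulr0 mul0r.
set s := Num.sqrt g.
have hs : 0 < s by rewrite sqrtr_gt0.
have gs : g = s ^+ 2 by rewrite sqr_sqrtr // ltW.
have hl : ln g = 2 * ln s by rewrite gs lnXn // mulr_natl.
have hv : ln (s^-1) <= s^-1 - 1 by apply: ln_le_sub1; rewrite invr_gt0.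
rewrite lnV' // in hv.
have sv : s * s^-1 = 1 by rewrite mulfV // gt_eqF.
have h1 : 0 <= a * s ^+ 2 by rewrite mulr_ge0 // sqr_ge0.
have h2 : 0 <= a * s ^+ 2 * (ln s - 1 + s^-1) by apply: mulr_ge0 => //; lra.
rewrite hl gs.
have e : a * s ^+ 2 * (ln s - 1 + s^-1) = a * s ^+ 2 * ln s - a * s ^+ 2 + a * s * (s * s^-1) by ring.
rewrite sv in e.
nra.
Qed.

Lemma le_sum_term n (v : 'I_n -> R) j : (forall i, 0 <= v i) -> v j <= \sum_i v i.
Proof. by move=> hv; rewrite (bigD1 j) //= lerDl sumr_ge0. Qed.

Lemma alg1 (a g t : R) : g = t ^+ 2 -> 2 * (a * g - a * t) = a * (t - 1) ^+ 2 + (a * g - a).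
Proof. by move=> ->; ring. Qed.

Lemma alg2 (a g t : R) : g = t ^+ 2 -> a * (t + 1) ^+ 2 + a * (t - 1) ^+ 2 = 2 * (a * g + a).
Proof. by move=> ->; ring. Qed.

Lemma alg3 (a g t : R) : g = t ^+ 2 -> (a * g - a) ^+ 2 = (a * (t - 1) ^+ 2) * (a * (t + 1) ^+ 2).
Proof. by move=> ->; ring. Qed.

Variable m : nat.
Variable y : 'I_(2 * m).+1 -> R.
Hypothesis hy : forall i, 0 <= y i.
Hypothesis hc : 0 < cst y.

Lemma key x j : nonneg x -> cpos x -> cpos (Imap y x) -> \sum_i x i = cst y ->
  (Imap y x j - x j) ^+ 2 / 2 <= Fy y (Imap y x) - Fy y x.
Proof.
move=> hx hp hpz hs.
apply: le_trans; last exact: (step3 hy hc hx hp hpz).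
set s := fun i => Num.sqrt (gfun y x i).
have hg : forall i, 0 <= gfun y x i by move=> i; exact: gfun_ge0.
have gs : forall i, gfun y x i = s i ^+ 2 by move=> i; rewrite sqr_sqrtr.
have H1 : \sum_i x i * (s i - 1) ^+ 2 <= \sum_j (Imap y x j * ln (gfun y x j)).
  apply: le_trans; last first.
    apply: ler_sum => i _; rewrite Imap_g; exact: (coord_ineq (hx i) (hg i)).
  have -> : \sum_i 2 * (x i * gfun y x i - x i * Num.sqrt (gfun y x i))
      = \sum_i x i * (s i - 1) ^+ 2 + (\sum_i Imap y x i - \sum_i x i).
    rewrite -sumrB -big_split /=; apply: eq_bigr => i _.
    rewrite Imap_g; apply: alg1; exact: gs i.
  by rewrite sum_Imap // hs subrr addr0.
have H2 : x j * (s j - 1) ^+ 2 <= \sum_i x i * (s i - 1) ^+ 2.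
  apply: le_sum_term => i; by rewrite mulr_ge0 ?sqr_ge0.
have hzj : Imap y x j <= cst y.
  rewrite -(sum_Imap hy hc (x:=x)) //; apply: le_sum_term => i; exact: Imap_ge0.
have hxj : x j <= cst y by rewrite -hs; apply: le_sum_term.
have hX : 0 <= x j * (s j - 1) ^+ 2 by rewrite mulr_ge0 ?sqr_ge0.
have hP : x j * (s j + 1) ^+ 2 <= 4 * cst y.
  have : x j * (s j + 1) ^+ 2 + x j * (s j - 1) ^+ 2 = 2 * (Imap y x j + x j).
    rewrite Imap_g; apply: alg2; exact: gs j.
  have := hx j; lra.
have e : (Imap y x j - x j) ^+ 2 = (x j * (s j - 1) ^+ 2) * (x j * (s j + 1) ^+ 2).
  rewrite Imap_g; apply: alg3; exact: gs j.
rewrite e.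
have hC := hc.
set X := x j * (s j - 1) ^+ 2 in hX H2 e *.
set P := x j * (s j + 1) ^+ 2 in hP e *.
have hP0 : 0 <= P by rewrite /P mulr_ge0 ?sqr_ge0.
set S1 := \sum_i x i * (s i - 1) ^+ 2 in H1 H2.
set S2 := \sum_j0 Imap y x j0 * ln (gfun y x j0) in H1 *.
nra.
Qed.

End Key4.

Section Cont.
Variable R : realType.
Variable n : nat.
Variable xinf : 'I_n -> R.

Definition near (P : ('I_n -> R) -> Prop) :=
  exists2 eta : R, 0 < eta & forall x, (forall i, `|x i - xinf i| < eta) -> P x.

Definition cont (f : ('I_n -> R) -> R) :=
  forall e, 0 < e -> near (fun x => `|f x - f xinf| < e).

Lemma near_and P Q : near P -> near Q -> near (fun x => P x /\ Q x).
Proof.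
move=> [a ha hP] [b hb hQ]; exists (Num.min a b); first by rewrite lt_min ha hb.
move=> x hx; split; [apply: hP | apply: hQ] => i; have := hx i; rewrite lt_min => /andP[] //.
Qed.

Lemma near_imp (P Q : ('I_n -> R) -> Prop) : (forall x, P x -> Q x) -> near P -> near Q.
Proof. by move=> h [a ha hP]; exists a => // x /hP /h. Qed.

Lemma cont_eq f g : (forall x, f x = g x) -> cont f -> cont g.
Proof.
move=> h hf e he; apply: near_imp (hf e he) => x; by rewrite !h.
Qed.

Lemma cont_const c : cont (fun _ => c).
Proof. move=> e he; exists 1 => // x _; by rewrite subrr normr0. Qed.

Lemma cont_coord i : cont (fun x => x i).
Proof. move=> e he; exists e => // x; exact. Qed.

Lemma cont_add f g : cont f -> cont g -> cont (fun x => f x + g x).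
Proof.
move=> hf hg e he.
have he2 : 0 < e / 2 by rewrite divr_gt0.
apply: near_imp (near_and (hf _ he2) (hg _ he2)) => x [h1 h2].
have -> : f x + g x - (f xinf + g xinf) = (f x - f xinf) + (g x - g xinf) by ring.
apply: le_lt_trans (ler_normD _ _) _; lra.
Qed.

Lemma cont_mul f g : cont f -> cont g -> cont (fun x => f x * g x).
Proof.
move=> hf hg e he.
set K := `|f xinf| + `|g xinf| + 1.
have hK : 0 < K by rewrite /K; have := normr_ge0 (f xinf); have := normr_ge0 (g xinf); lra.
set d := Num.min 1 (e / K).
have hd : 0 < d by rewrite lt_min ltr01 divr_gt0.
have hd1 : d <= 1 by rewrite /d ge_min lexx.
have hdK : d * K <= e.
  have : d <= e / K by rewrite /d ge_min lexx orbT.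
  by rewrite ler_pdivlMr.
apply: near_imp (near_and (hf _ hd) (hg _ hd)) => x [h1 h2].
set a := f x - f xinf in h1; set b := g x - g xinf in h2.
have -> : f x * g x - f xinf * g xinf = a * b + f xinf * b + g xinf * a by rewrite /a /b; ring.
apply: le_lt_trans (ler_normD _ _) _.
apply: le_lt_trans (lerD (ler_normD _ _) (lexx _)) _.
rewrite !normrM.
have := normr_ge0 a; have := normr_ge0 b; have := normr_ge0 (f xinf); have := normr_ge0 (g xinf).
rewrite /K in hK hdK.
nra.
Qed.

Lemma cont_inv f : f xinf != 0 -> cont f -> cont (fun x => (f x)^-1).
Proof.
move=> h0 hf e he.
set a0 := `|f xinf|.
have ha0 : 0 < a0 by rewrite normr_gt0.
set d := Num.min (a0 / 2) (e * a0 ^+ 2 / 2).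
have hd : 0 < d by rewrite lt_min !divr_gt0 ?mulr_gt0 ?exprn_gt0.
have hd1 : d <= a0 / 2 by rewrite /d ge_min lexx.
have hd2 : d <= e * a0 ^+ 2 / 2 by rewrite /d ge_min lexx orbT.
apply: near_imp (hf _ hd) => x h1.
have hfx : a0 / 2 < `|f x|.
  have := ler_distD (f x) (f xinf) 0; rewrite !subr0 distrC -/a0; lra.
have fx0 : f x != 0 by rewrite -normr_gt0; lra.
set u := `|(f x)^-1 - (f xinf)^-1|.
have hu : u * (`|f x| * a0) = `|f x - f xinf|.
  rewrite /u /a0 -!normrM distrC; congr `|_|; field; by rewrite fx0 h0.
have hP : a0 ^+ 2 / 2 < `|f x| * a0.
  have -> : a0 ^+ 2 / 2 = (a0 / 2) * a0 by rewrite expr2; field.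
  by rewrite ltr_pM2r.
have hP0 : 0 < `|f x| * a0 by apply: le_lt_trans hP; rewrite divr_ge0 ?sqr_ge0.
have : u * (`|f x| * a0) < e * (`|f x| * a0).
  rewrite hu; apply: (lt_le_trans h1); apply: (le_trans hd2).
  rewrite -mulrA ler_pM2l //; exact: ltW.
by rewrite ltr_pM2r.
Qed.

Lemma cont_sum p (F : 'I_p -> ('I_n -> R) -> R) :
  (forall i, cont (F i)) -> cont (fun x => \sum_(i < p) F i x).
Proof.
elim: p F => [|p IH] F hF.
  by apply: (cont_eq (f := fun _ => 0)) => [x|]; rewrite ?big_ord0 //; exact: cont_const.
apply: (cont_eq (f := fun x => \sum_(i < p) F (widen_ord (leqnSn p) i) x + F ord_max x)).
  by move=> x; rewrite big_ord_recr.
apply: cont_add => //; exact: IH.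
Qed.

Lemma cont_ext k : cont (fun x => ext x k).
Proof. rewrite /ext; case: insub => [i|]; [exact: cont_coord | exact: cont_const]. Qed.


End Cont.

Section Final.
Variable R : realType.
Variable m : nat.
Variable y : 'I_(2 * m).+1 -> R.
Variable xinf : 'I_m.+1 -> R.

Lemma cont_conv k : cont xinf (fun x => conv x k).
Proof.
rewrite /conv; apply: (cont_sum (F := fun (j : 'I_k.+1) x => ext x (k - j) * ext x j)) => j.
apply: cont_mul; exact: cont_ext.
Qed.

Lemma cont_Imap (j : 'I_m.+1) : (forall l : 'I_m.+1, conv xinf (l + j)%N != 0) ->
  cont xinf (fun x => Imap y x j).
Proof.
move=> h.
apply: (cont_eq (f := fun x => (x j * (1 / cst y)) *
   \sum_(l < m.+1) (x l * ext y (l + j)%N * (conv x (l + j)%N)^-1))) => //.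
apply: cont_mul; first by apply: cont_mul; [exact: cont_coord | exact: cont_const].
apply: (cont_sum (F := fun (l : 'I_m.+1) x => x l * ext y (l + j)%N * (conv x (l + j)%N)^-1)) => l.
apply: cont_mul; first by apply: cont_mul; [exact: cont_coord | exact: cont_const].
apply: (cont_inv (f := fun x => conv x (l + j)%N)) => //; exact: cont_conv.
Qed.

Lemma conv_le (x : 'I_m.+1 -> R) k : nonneg x -> conv x k <= (\sum_i x i) ^+ 2.
Proof.
move=> hx; rewrite conv_pairs expr2 mulr_suml; apply: ler_sum => l _.
rewrite mulr_sumr; apply: ler_sum => j _.
case: eqP => _; first by rewrite mul1r.
by rewrite mul0r mulr_ge0.
Qed.

End Final.

From Stdlib Require Import FunctionalExtensionality.
Unset Implicit Arguments.

Theorem lemma4 (R : realType) (m : nat) (y : 'I_(2 * m).+1 -> R)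
    (xs : nat -> 'I_m.+1 -> R) (xinf : 'I_m.+1 -> R) :
  (1 <= m)%N ->
  (forall i, 0 <= y i) ->
  0 < cst y ->
  (forall j, 0 < xs 0%N j) ->
  (forall t (k : nat), (k <= 2 * m)%N -> 0 < conv (xs t) k) ->
  (forall t j, xs t.+1 j = Imap y (xs t) j) ->
  limit_point xs xinf ->
  (forall (k : nat), (k <= 2 * m)%N -> 0 < conv xinf k) ->
  forall j, xinf j = Imap y xinf j.
Proof.
move=> hm hy hc hx0 hpos hrec hlim hinf j.
have E : forall t, xs t.+1 = Imap y (xs t).
  by move=> t; apply: functional_extensionality => i; exact: hrec.
have nn : forall t, nonneg (xs t).
  elim => [|t IH] i; first exact: ltW.
  rewrite hrec; exact: Imap_ge0.
have cp : forall t, cpos (xs t) by move=> t k hk; exact: hpos.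
have sum1 : forall t, \sum_i xs t.+1 i = cst y.
  by move=> t; rewrite E sum_Imap.
have inc : forall t, (xs t.+2 j - xs t.+1 j) ^+ 2 / 2 <= Fy y (xs t.+2) - Fy y (xs t.+1).
  move=> t; rewrite [xs t.+2]E; apply: key => //; rewrite -E //.
have mono : forall t d, Fy y (xs t.+1) <= Fy y (xs (t.+1 + d)%N).
  move=> t; elim => [|d IH]; first by rewrite addn0.
  apply: (le_trans IH); rewrite addnS.
  have := inc (t + d)%N; rewrite -addSn.
  have : 0 <= (xs (t.+1 + d).+1 j - xs (t.+1 + d) j) ^+ 2 / 2 by rewrite divr_ge0 ?sqr_ge0.
  rewrite addSn; lra.
set B := \sum_(k < (2 * m).+1) y k * ln (cst y ^+ 2).
have bound : forall t, Fy y (xs t.+1) <= B.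
  move=> t; rewrite /Fy /B; apply: ler_sum => k _; apply: ler_wpM2l => //.
  have hk : (k <= 2 * m)%N by rewrite -ltnS.
  rewrite ler_ln ?posrE ?exprn_gt0 ?cp //.
  rewrite -(sum1 t); exact: conv_le.
case: (eqVneq (xinf j) (Imap y xinf j)) => // hne; exfalso.
set d := `|Imap y xinf j - xinf j|.
have hd : 0 < d by rewrite normr_gt0 subr_eq0 eq_sym.
have hd3 : 0 < d / 3 by rewrite divr_gt0.
have hci : forall l : 'I_m.+1, conv xinf (l + j)%N != 0.
  move=> l; rewrite gt_eqF // hinf //; have := ltn_ord l; have := ltn_ord j; lia.
have [eta heta hnear] := cont_Imap y hci hd3.
set eta' := Num.min eta (d / 3).
have heta' : 0 < eta' by rewrite lt_min heta hd3.
set delta := d ^+ 2 / 18.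
have hdelta : 0 < delta by rewrite divr_gt0 ?exprn_gt0.
have step : forall T, exists t, (T < t)%N /\ delta <= Fy y (xs t.+1) - Fy y (xs t).
  move=> T; have [t [hTt hclose]] := hlim eta' heta' T.+1.
  exists t; split => //.
  case: t hTt hclose => [//|t] _ hclose.
  apply: le_trans (inc t).
  have h1 : `|Imap y (xs t.+1) j - Imap y xinf j| < d / 3.
    apply: hnear => i; have := hclose i; rewrite lt_min => /andP[] //.
  have h2 : `|xs t.+1 j - xinf j| < d / 3.
    have := hclose j; rewrite lt_min => /andP[] //.
  rewrite (hrec t.+1 j).
  set A := Imap y (xs t.+1) j in h1 *.
  have t1 := ler_distD A (Imap y xinf j) (xinf j).
  have t2 := ler_distD (xs t.+1 j) A (xinf j).
  rewrite [`|Imap y xinf j - A|]distrC -/d in t1.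
  have h3 : d / 3 <= `|A - xs t.+1 j| by lra.
  have h4 : d / 3 * (d / 3) <= (A - xs t.+1 j) ^+ 2.
    have := ler_pM (ltW hd3) (ltW hd3) h3 h3.
    by rewrite -normrM ger0_norm ?expr2 // -expr2 sqr_ge0.
  have e : d / 3 * (d / 3) = d ^+ 2 / 9 by rewrite expr2; field.
  rewrite e in h4; rewrite /delta; lra.
have grow : forall N : nat, exists t, Fy y (xs 1%N) + N%:R * delta <= Fy y (xs t.+1).
  elim => [|N [t ht]]; first by exists 0%N; rewrite mul0r addr0.
  have [t' [ht' hinc]] := step t.+1.
  exists t'; case: t' ht' hinc => [//|t'] ht' hinc.
  have hm1 := mono t (t' - t)%N.
  have ett : (t.+1 + (t' - t))%N = t'.+1 by lia.
  rewrite ett in hm1.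
  rewrite mulrSr; lra.
set v := (B - Fy y (xs 1%N)) / delta.
have hv := archi_boundP (normr_ge0 v).
have [t ht] := grow (Num.Def.archi_bound `|v|).
have hb := bound t.
have hvv : v <= `|v| := ler_norm v.
have : B - Fy y (xs 1%N) < (Num.Def.archi_bound `|v|)%:R * delta.
  rewrite -ltr_pdivrMr //; exact: le_lt_trans hvv hv.
lra.
Qed.
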